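(* Let $a\ge b\ge1$ be integers with either $b\ge2$, or $b=1$ and $a\ge5$, and $A=\begin{pmatrix}2&-a\\-b&2\end{pmatrix}$. Then: (1) if $j\in\mathbb Z_+$, $k\ge1$ and $j\equiv k\pmod 2$, then $(\beta_1^j,\beta_2^k)=(\beta_1^{j+1},\beta_2^{k-1})$; (2) the sequence $\langle\beta_1^{2k},(\beta_2^0)^\vee\rangle$, $k\in\mathbb Z_+$, is decreasing, and strictly decreasing if $ab>4$; (3) $a\langle\beta_2^{2k},(\beta_1^0)^\vee\rangle=b\langle\beta_1^{2k},(\beta_2^0)^\vee\rangle$ for all $k\in\mathbb Z_+$.
   Context: Let $\mathfrak g(A)$ have simple roots $\alpha_1,\alpha_2$, invariant symmetric bilinear form $(\cdot,\cdot)$ with $(\alpha_1,\alpha_1)=2$, $(\alpha_2,\alpha_2)=2a/b$, $(\alpha_1,\alpha_2)=-a$, and for a real root $\beta$ let $\langle\lambda,\beta^\vee\rangle=2(\lambda,\beta)/(\beta,\beta)$. $\mathbb Z_+=\{0,1,2,\dots\}$. Define $c_0=d_0=0$, $c_1=d_1=1$, $c_{k+2}+c_k=a d_{k+1}$, $d_{k+2}+d_k=b c_{k+1}$, and $\beta_1^j=c_j\alpha_1+d_{j+1}\alpha_2$, $\beta_2^j=c_{j+1}\alpha_1+d_j\alpha_2$. *)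

(* Defs.v *)
From mathcomp Require Import all_boot all_order all_algebra.
Set Implicit Arguments. Unset Strict Implicit. Unset Printing Implicit Defensive.
Import Order.TTheory GRing.Theory Num.Theory.
Local Open Scope ring_scope.

(* Rank-2 root lattice with basis alpha_1, alpha_2; an element
   x alpha_1 + y alpha_2 is represented by the pair (x, y) of rationals. *)
Definition elt := (rat * rat)%type.

Fixpoint cseq (a b : nat) (n : nat) : rat :=
  match n with
  | 0%N => 0
  | S m1 => match m1 with
            | 0%N => 1
            | S m => a%:R * dseq a b m1 - cseq a b m
            end
  end
with dseq (a b : nat) (n : nat) : rat :=
  match n with
  | 0%N => 0
  | S m1 => match m1 with
            | 0%N => 1
            | S m => b%:R * cseq a b m1 - dseq a b m
            end
  end.

Definition beta1 (a b j : nat) : elt := (cseq a b j, dseq a b j.+1).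
Definition beta2 (a b j : nat) : elt := (cseq a b j.+1, dseq a b j).

(* invariant symmetric bilinear bform:
   (a1,a1) = 2, (a2,a2) = 2a/b, (a1,a2) = -a *)
Definition bform (a b : nat) (u v : elt) : rat :=
  2 * u.1 * v.1 - a%:R * (u.1 * v.2 + u.2 * v.1)
  + (2 * a%:R / b%:R) * u.2 * v.2.

Definition copair (a b : nat) (lam beta : elt) : rat :=
  2 * bform a b lam beta / bform a b beta beta.

(* Main.v *)
Require Import Defs.
From mathcomp Require Import all_boot all_order all_algebra.
From mathcomp Require Import ring lra zify.
Import Order.TTheory GRing.Theory Num.Theory.
Local Open Scope ring_scope.

Lemma cS a b n : cseq a b n.+2 = a%:R * dseq a b n.+1 - cseq a b n.
Proof. by []. Qed.
Lemma dS a b n : dseq a b n.+2 = b%:R * cseq a b n.+1 - dseq a b n.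
Proof. by []. Qed.

Lemma bform_sym a b u v : bform a b u v = bform a b v u.
Proof. rewrite /bform; ring. Qed.

Lemma s2_inv a b x y z w : (0 < b)%N ->
  bform a b (x, b%:R*x - y) (z,w) = bform a b (x,y) (z, b%:R*z - w).
Proof.
move=> hb; have hb0 : (b%:R : rat) != 0 by rewrite pnatr_eq0 -lt0n.
rewrite /bform /=; by field.
Qed.

Lemma s1_inv a b x y z w :
  bform a b (a%:R*y - x, y) (z,w) = bform a b (x,y) (a%:R*w - z, w).
Proof. rewrite /bform /=; ring. Qed.

Definition P a b j k := bform a b (beta1 a b j) (beta2 a b k).

Lemma rule1 a b j k : (0 < b)%N -> P a b j.+1 k = P a b k.+1 j.
Proof.
move=> hb; rewrite /P /beta1 /beta2 !dS s2_inv // [RHS]bform_sym //.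
Qed.

Lemma rule2 a b j k : P a b j k.+1 = P a b k j.+1.
Proof.
rewrite /P /beta1 /beta2 !cS -s1_inv [RHS]bform_sym //.
Qed.

Lemma Psym a b m k : (0 < b)%N -> P a b (k + 2 * m) k = P a b k (k + 2 * m).
Proof.
move=> hb; elim: m k => [|m IH] k; first by rewrite muln0 addn0.
have -> : (k + 2 * m.+1 = (k + 2 * m).+1.+1)%N by lia.
rewrite rule1 //.
have := IH k.+1; rewrite addSn => <-.
by rewrite rule2.
Qed.

Lemma part1 a b j k : (0 < b)%N -> (1 <= k)%N -> odd j = odd k ->
  P a b j k = P a b j.+1 k.-1.
Proof.
move=> hb; case: k => [//|k] _ h /=; rewrite rule1 //.
have [jk|kj] := leqP j k.+1.
  have e := odd_double_half (k.+1 - j).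
  rewrite oddB // h addbb add0n -mul2n in e.
  have -> : k.+1 = (j + 2 * (k.+1 - j)./2)%N by lia.
  by rewrite Psym.
have e := odd_double_half (j - k.+1).
rewrite oddB ?(ltnW kj) // h addbb add0n -mul2n in e.
have -> : j = (k.+1 + 2 * (j - k.+1)./2)%N by lia.
by rewrite Psym.
Qed.

Lemma parity a b n : cseq a b (2 * n).+1 = dseq a b (2 * n).+1 /\
  a%:R * dseq a b (2 * n) = b%:R * cseq a b (2 * n).
Proof.
elim: n => [|n [IH1 IH2]]; first by split; rewrite ?muln0 /= ?mulr0.
have e : (2 * n.+1 = (2 * n).+2)%N by lia.
have e2 : a%:R * dseq a b (2 * n.+1) = b%:R * cseq a b (2 * n.+1).
  rewrite e dS cS IH1; lra.
split=> //.
rewrite e (cS a b (2 * n).+1) (dS a b (2 * n).+1) -e e2 IH1; lra.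
Qed.

Lemma cop1 a b n : (0 < b)%N -> copair a b (beta1 a b n) (beta2 a b 0)
   = 2 * cseq a b n - a%:R * dseq a b n.+1.
Proof.
move=> hb; have hb0 : (b%:R : rat) != 0 by rewrite pnatr_eq0 -lt0n.
rewrite /copair /bform /beta1 /beta2 /=. by field.
Qed.

Lemma cop2 a b n : (0 < a)%N -> (0 < b)%N ->
  copair a b (beta2 a b n) (beta1 a b 0)
   = 2 * dseq a b n - b%:R * cseq a b n.+1.
Proof.
move=> ha hb; have ha0 : (a%:R : rat) != 0 by rewrite pnatr_eq0 -lt0n.
have hb0 : (b%:R : rat) != 0 by rewrite pnatr_eq0 -lt0n.
rewrite /copair /bform /beta1 /beta2 /=. by field; rewrite ha0 hb0.
Qed.

Lemma step a b k : (0 < a)%N ->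
  cseq a b (2 * k.+1) / a%:R = cseq a b (2 * k).+1 - cseq a b (2 * k) / a%:R /\
  cseq a b (2 * k.+1).+1 = (a * b)%:R * (cseq a b (2 * k).+1 - cseq a b (2 * k) / a%:R)
     - cseq a b (2 * k).+1.
Proof.
move=> ha; have ha0 : (a%:R : rat) != 0 by rewrite pnatr_eq0 -lt0n.
have [p1 p2] := parity a b k.
have [q1 q2] := parity a b k.+1.
have e : (2 * k.+1 = (2 * k).+2)%N by lia.
have h1 : cseq a b (2 * k.+1) / a%:R = cseq a b (2 * k).+1 - cseq a b (2 * k) / a%:R.
  rewrite e cS -p1; field => //.
split=> //.
rewrite {1}e cS -e q2 natrM.
have -> : cseq a b (2 * k.+1) = a%:R * (cseq a b (2 * k.+1) / a%:R) by field.
by rewrite h1; field.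
Qed.

Lemma inv a b k : (0 < a)%N -> (4 <= a * b)%N ->
  1 <= cseq a b (2 * k).+1 /\ 2 * (cseq a b (2 * k) / a%:R) <= cseq a b (2 * k).+1.
Proof.
move=> ha hM; have hM' : (4 : rat) <= (a * b)%:R by rewrite (ler_nat _ 4).
elim: k => [|k [IH1 IH2]]; first by rewrite muln0 /= mul0r mulr0.
have [s1 s2] := step a b k ha.
rewrite s1 s2.
move: IH1 IH2 hM'.
move: (cseq a b (2 * k).+1) (cseq a b (2 * k) / a%:R) ((a * b)%:R) => X Y M IH1 IH2 hM'.
have h : 0 <= (M - 4) * (X - Y) by apply: mulr_ge0; lra.
rewrite mulrBr mulrBl in h; split; rewrite mulrBr; lra.
Qed.

Lemma fdiff a b k : (0 < a)%N -> (0 < b)%N ->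
  copair a b (beta1 a b (2 * k)%N) (beta2 a b 0)
  - copair a b (beta1 a b (2 * k.+1)%N) (beta2 a b 0)
  = a%:R * (((a * b)%:R - 4) * (cseq a b (2 * k).+1 - cseq a b (2 * k) / a%:R)).
Proof.
move=> ha hb; have ha0 : (a%:R : rat) != 0 by rewrite pnatr_eq0 -lt0n.
rewrite !cop1 //.
have [p1 p2] := parity a b k.
have [q1 q2] := parity a b k.+1.
have [s1 s2] := step a b k ha.
rewrite -p1 -q1 s2.
have -> : cseq a b (2 * k.+1) = a%:R * (cseq a b (2 * k.+1) / a%:R) by field.
rewrite s1.
have -> : cseq a b (2 * k) = a%:R * (cseq a b (2 * k) / a%:R) by field.
set X := cseq a b (2 * k).+1; set Y := cseq a b (2 * k) / a%:R.
by rewrite natrM; field.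
Qed.

Theorem lemma3p10 (a b : nat) :
  (b <= a)%N -> (1 <= b)%N -> ((2 <= b)%N \/ (b = 1%N /\ (5 <= a)%N)) ->
  [/\ (forall j k : nat, (1 <= k)%N -> odd j = odd k ->
         bform a b (beta1 a b j) (beta2 a b k)
         = bform a b (beta1 a b j.+1) (beta2 a b k.-1)),
      (forall k : nat,
         copair a b (beta1 a b (2 * k.+1)%N) (beta2 a b 0)
         <= copair a b (beta1 a b (2 * k)%N) (beta2 a b 0)),
      ((4 < a * b)%N -> forall k : nat,
         copair a b (beta1 a b (2 * k.+1)%N) (beta2 a b 0)
         < copair a b (beta1 a b (2 * k)%N) (beta2 a b 0))
    & (forall k : nat,
         a%:R * copair a b (beta2 a b (2 * k)%N) (beta1 a b 0)
         = b%:R * copair a b (beta1 a b (2 * k)%N) (beta2 a b 0))].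
Proof.
move=> hba hb hcase.
have ha : (0 < a)%N by lia.
have hM : (4 <= a * b)%N by case: hcase => [h|[-> h]]; nia.
have ha' : (0 : rat) < a%:R by rewrite ltr0n.
split.
- by move=> j k hk hjk; apply: part1.
- move=> k; rewrite -subr_ge0 fdiff //.
  have [i1 i2] := inv a b k ha hM.
  have hM' : (4 : rat) <= (a * b)%:R by rewrite (ler_nat _ 4).
  apply: mulr_ge0; first lra.
  apply: mulr_ge0; lra.
- move=> hM4 k; rewrite -subr_gt0 fdiff //.
  have [i1 i2] := inv a b k ha hM.
  have hM' : (4 : rat) < (a * b)%:R by rewrite (ltr_nat _ 4).
  apply: mulr_gt0; first lra.
  apply: mulr_gt0; lra.
- move=> k; rewrite cop2 // cop1 //.
  have [p1 p2] := parity a b k.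
  rewrite p1; lra.
Qed.
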